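(* Let $N\ge 1$ and let the parameter space $\Theta\subseteq\mathcal{R}$ of the correlated Bernoulli random graph model be nondegenerate. Then the disagreement vector statistic $\mathcal{H}$ is a complete and sufficient statistic for the family $\{\mathbb{P}_\theta:\theta\in\Theta\}$. Completeness here means: for every $f:\{0,\star,1\}^N\to\mathbb{R}$, if $\mathbb{E}_\theta(f(\mathcal{H}))=0$ for all $\theta\in\Theta$, then $f$ is the zero function.
   Context: Correlated Bernoulli random graph model: fix a positive integer $N$ and let $\mathcal{R}=\{(p_1,\dots,p_N,\varrho_1,\dots,\varrho_N): p_i,\varrho_i\in[0,1]\}$. A parameter space is any subset $\Theta\subseteq\mathcal{R}$. For $\theta=(p_1,\dots,p_N,\varrho_1,\dots,\varrho_N)\in\Theta$, the random vectors $X=(X_1,\dots,X_N)$, $Y=(Y_1,\dots,Y_N)\in\{0,1\}^N$ are such that the pairs $(X_i,Y_i)$, $i=1,\dots,N$, are independent; $X_i,Y_i$ are each marginally Bernoulli$(p_i)$ with Pearson correlation $\varrho_i$. Equivalently $\mathbb{P}(X_i=Y_i=1)=p_i^2+\varrho_ip_i(1-p_i)$, $\mathbb{P}(X_i=Y_i=0)=(1-p_i)^2+\varrho_ip_i(1-p_i)$, $\mathbb{P}(X_i=1,Y_i=0)=\mathbb{P}(X_i=0,Y_i=1)=(1-\varrho_i)p_i(1-p_i)$. The sample space is $\mathcal{X}=\{(x,y):x,y\in\{0,1\}^N\}$; a statistic is any function on $\mathcal{X}$. Let $\mathcal{R}^o=\{(p_1,\dots,p_N,0,\dots,0):p_1,\dots,p_N\in\mathbb{R}\}$.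 $\Theta$ is called nondegenerate if $\Theta\cap\mathcal{R}^o$ has an interior point relative to $\mathcal{R}^o$, i.e. there exist $z\in\Theta\cap\mathcal{R}^o$ and $\epsilon>0$ such that $\Theta\cap\mathcal{R}^o$ contains every point of $\mathcal{R}^o$ at distance less than $\epsilon$ from $z$. The disagreement vector statistic $\mathcal{H}:\mathcal{X}\to\{0,\star,1\}^N$ has $i$th component $1$ if $x_i=y_i=1$, $0$ if $x_i=y_i=0$, and $\star$ if $x_i\ne y_i$. *)

(* Defs.v *)
From HB Require Import structures.
From mathcomp Require Import all_boot all_order all_algebra.
From mathcomp Require Import reals.
Set Implicit Arguments. Unset Strict Implicit. Unset Printing Implicit Defensive.
Import Order.TTheory GRing.Theory Num.Theory.
Local Open Scope ring_scope.

(* A parameter theta = (p_1..p_N, rho_1..rho_N), stored as a pair (p, rho). *)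
Definition param (R : realType) (N : nat) : Type :=
  ({ffun 'I_N -> R} * {ffun 'I_N -> R})%type.

Definition sample (N : nat) : finType :=
  ({ffun 'I_N -> bool} * {ffun 'I_N -> bool})%type.

(* The alphabet {0, star, 1} encoded as option bool:
   Some false = 0, None = star, Some true = 1. *)
Definition tri : finType := option bool.

Definition in_calR (R : realType) (N : nat) (th : param R N) : Prop :=
  forall i : 'I_N, 0 <= th.1 i <= 1 /\ 0 <= th.2 i <= 1.

(* Nondegeneracy: Theta cap R^o has an interior point relative to R^o
   (R^o identified with R^N via p |-> (p, 0); Euclidean distance). *)
Definition nondegenerate_param (R : realType) (N : nat) (Theta : param R N -> Prop) : Prop :=
  exists (z : {ffun 'I_N -> R}) (eps : R),
    0 < eps /\ Theta (z, [ffun _ => 0]) /\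
    forall p : {ffun 'I_N -> R},
      Num.sqrt (\sum_(i < N) (p i - z i) ^+ 2) < eps -> Theta (p, [ffun _ => 0]).

Definition cell_prob (R : realType) (p rho : R) (a b : bool) : R :=
  match a, b with
  | true, true => p ^+ 2 + rho * p * (1 - p)
  | false, false => (1 - p) ^+ 2 + rho * p * (1 - p)
  | _, _ => (1 - rho) * p * (1 - p)
  end.

Definition prob (R : realType) (N : nat) (th : param R N) (w : sample N) : R :=
  \prod_(i < N) cell_prob (th.1 i) (th.2 i) (w.1 i) (w.2 i).

Definition disagree (N : nat) (w : sample N) : {ffun 'I_N -> tri} :=
  [ffun i => if w.1 i == w.2 i then Some (w.1 i) else None].

Definition probH (R : realType) (N : nat) (th : param R N) (h : {ffun 'I_N -> tri}) : R :=
  \sum_(w : sample N | disagree w == h) prob th w.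

Definition expectH (R : realType) (N : nat) (th : param R N)
  (f : {ffun 'I_N -> tri} -> R) : R :=
  \sum_(w : sample N) prob th w * f (disagree w).

(* Sufficiency: the conditional distribution of the data given H admits a
   version q not depending on theta: P_theta(w) = q(w) * P_theta(H = H(w)). *)
Definition sufficient_H (R : realType) (N : nat) (Theta : param R N -> Prop) : Prop :=
  exists q : sample N -> R,
    forall th, Theta th -> forall w : sample N,
      prob th w = q w * probH th (disagree w).

Definition complete_H (R : realType) (N : nat) (Theta : param R N -> Prop) : Prop :=
  forall f : {ffun 'I_N -> tri} -> R,
    (forall th, Theta th -> expectH th f = 0) -> forall h, f h = 0.

(* Main.v *)
Require Import Defs.
From mathcomp Require Import all_boot all_order all_algebra.
From mathcomp Require Import reals ring lra zify.
Import Order.TTheory GRing.Theory Num.Theory.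
Local Open Scope ring_scope.
Set Implicit Arguments. Unset Strict Implicit.

Section Aux.
Variable R : realType.

Lemma sum_sample (N : nat) (F : 'I_N -> bool -> bool -> R) :
  \sum_(w : sample N) \prod_i F i (w.1 i) (w.2 i) =
  \prod_i \sum_a \sum_b F i a b.
Proof.
transitivity (\sum_(x : {ffun 'I_N -> bool}) \sum_(y : {ffun 'I_N -> bool}) \prod_i F i (x i) (y i)).
  by rewrite pair_bigA.
rewrite bigA_distr_bigA /=.
apply: eq_bigr => x _.
by rewrite bigA_distr_bigA.
Qed.

Lemma eq_ffun_prod (N : nat) (T : finType) (f g : {ffun 'I_N -> T}) :
  ((f == g)%:R : R) = \prod_i ((f i == g i)%:R).
Proof.
case: eqP => [->|/eqP ne].
  by rewrite big1 // => i _; rewrite eqxx.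
have /existsP[i ni] : [exists i, f i != g i].
  rewrite -(negbK [exists _, _]) negb_exists; apply/negP => /forallP h.
  move/eqP: ne; apply; apply/ffunP => i; apply/eqP; have := h i; by rewrite negbK.
by rewrite (bigD1 i) //= (negbTE ni) mul0r.
Qed.

Definition dis1 (a b : bool) : tri := if a == b then Some a else None.

Lemma disagreeE N (w : sample N) i : disagree w i = dis1 (w.1 i) (w.2 i).
Proof. by rewrite /disagree ffunE. Qed.

Lemma probHE N (th : param R N) h :
  probH th h = \prod_i \sum_a \sum_b
     ((dis1 a b == h i)%:R * cell_prob (th.1 i) (th.2 i) a b).
Proof.
rewrite -sum_sample /probH big_mkcond /=.
apply: eq_bigr => w _.
rewrite big_split /=.
transitivity ((disagree w == h)%:R * prob th w).
  by case: eqP => _; rewrite ?mul1r ?mul0r.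
rewrite (@eq_ffun_prod _ _ (disagree w) h); congr (_ * _).
by apply: eq_bigr => i _; rewrite disagreeE.
Qed.

Lemma suff_part N (Th : param R N -> Prop) : sufficient_H Th.
Proof.
exists (fun w : sample N => \prod_i (if w.1 i == w.2 i then 1 else 2^-1)).
move=> th _ w.
rewrite probHE /prob -big_split /=.
apply: eq_bigr => i _.
rewrite disagreeE /dis1.
rewrite !big_bool /=.
case: (w.1 i); case: (w.2 i) => /=; rewrite /cell_prob /=; field; done.
Qed.
End Aux.
Section Comp.
Variable R : realType.

Definition Lg (z d : R) (t : 'I_3) (y : R) : R :=
  match val t with
  | 0%N => (y - (z + d)) * (y - (z + 2 * d)) / (2 * d ^+ 2)
  | 1%N => - ((y - z) * (y - (z + 2 * d))) / d ^+ 2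
  | _ => (y - z) * (y - (z + d)) / (2 * d ^+ 2)
  end.

Definition Bc (z d : R) (t : 'I_3) (c : tri) : R :=
  match c with
  | Some true => Lg z d t 1
  | Some false => Lg z d t 0
  | None => 2 * Lg z d t (2^-1) - (Lg z d t 1 + Lg z d t 0) / 2
  end.

Lemma Dlemma (z d : R) a b c : d != 0 ->
  \sum_(tau < 3) Bc z d tau c * cell_prob (z + (tau : nat)%:R * d) 0 a b
  = (dis1 a b == c)%:R * (if a == b then 1 else 2^-1).
Proof.
move=> d0.
rewrite !big_ord_recr big_ord0 /=.
case: a; case: b; case: c => [[]|] /=; rewrite /Bc /Lg /cell_prob /dis1 /=; field; done.
Qed.
End Comp.
Lemma comp_part (R : realType) (N : nat) (Th : param R N -> Prop) :
  nondegenerate_param Th -> complete_H Th.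
Proof.
case=> z [eps [eps0 [_ Hball]]] f Hf h0.
pose M : R := (N.+1)%:R.
have M0 : 0 < M by rewrite /M ltr0n.
pose d := eps / (4 * M).
have d0 : 0 < d by rewrite /d divr_gt0 // mulr_gt0.
have dn0 : d != 0 by rewrite gt_eqF.
pose xp (t : {ffun 'I_N -> 'I_3}) : {ffun 'I_N -> R} :=
  [ffun i => z i + (t i : nat)%:R * d].
have Hin : forall t, Th (xp t, [ffun _ => 0]).
  move=> t; apply: Hball.
  have hsum : \sum_(i < N) (xp t i - z i) ^+ 2 <= N%:R * (4 * d ^+ 2).
    rewrite mulr_natl; have -> : 4 * d ^+ 2 *+ N = \sum_(i < N) (4 * d ^+ 2) by rewrite sumr_const card_ord.
    apply: ler_sum => i _.
    rewrite ffunE addrC addKr exprMn.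
    have ht : (t i : nat)%:R <= 2 :> R by rewrite (ler_nat R); have := ltn_ord (t i); lia.
    have ht0 : 0 <= (t i : nat)%:R :> R by [].
    have hd2 : 0 <= d ^+ 2 by rewrite sqr_ge0.
    rewrite -subr_ge0 -mulrBl; apply: mulr_ge0 => //; rewrite subr_ge0 expr2; nra.
  rewrite -[eps]ger0_norm ?ltW // -sqrtr_sqr ltr_sqrt ?exprn_gt0 //.
  apply: (le_lt_trans hsum).
  have hd : eps = d * (4 * M) by rewrite /d mulfVK // mulf_neq0 // gt_eqF.
  have hN : N%:R + 1 = M by rewrite /M -addn1 natrD.
  have hN0 : 0 <= N%:R :> R by [].
  rewrite hd.
  nra.
have key : f h0 = \sum_(t : {ffun 'I_N -> 'I_3})
    (\prod_i Bc (z i) d (t i) (h0 i)) * expectH (xp t, [ffun _ => 0]) f.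
  rewrite /expectH.
  under eq_bigr do rewrite mulr_sumr.
  rewrite exchange_big /=.
  transitivity (\sum_(w : sample N) f (disagree w) *
     \prod_i ((dis1 (w.1 i) (w.2 i) == h0 i)%:R *
              (if w.1 i == w.2 i then 1 else 2^-1))).
    transitivity (\sum_(w : sample N) f h0 *
     \prod_i ((dis1 (w.1 i) (w.2 i) == h0 i)%:R *
              (if w.1 i == w.2 i then 1 else 2^-1))).
      rewrite -mulr_sumr (sum_sample (fun i a b => (dis1 a b == h0 i)%:R * (if a == b then 1 else 2^-1))).
      rewrite big1 ?mulr1 // => i _.
      rewrite !big_bool /= /dis1 /=.
      case: (h0 i) => [[]|] /=; field; done.
    apply: eq_bigr => w _.
    rewrite big_split /=.
    have -> : \prod_i ((dis1 (w.1 i) (w.2 i) == h0 i)%:R : R) = ((disagree w == h0)%:R : R).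
      by rewrite eq_ffun_prod; apply: eq_bigr => i _; rewrite disagreeE.
    by case: eqP => [->|_]; rewrite ?mul0r ?mulr0.
  apply: eq_bigr => w _.
  transitivity (f (disagree w) * \prod_i \sum_(tau < 3)
     (Bc (z i) d tau (h0 i) * cell_prob (z i + (tau : nat)%:R * d) 0 (w.1 i) (w.2 i))).
    by congr (_ * _); apply: eq_bigr => i _; rewrite Dlemma.
  rewrite bigA_distr_bigA /= mulr_sumr.
  apply: eq_bigr => t _.
  rewrite /prob /= [RHS]mulrA [RHS]mulrC -big_split /=; congr (_ * _).
  by apply: eq_bigr => i _; rewrite !ffunE.
rewrite key big1 // => t _.
by rewrite Hf ?mulr0.
Qed.

Theorem theorem1 (R : realType) (N : nat) (Th : param R N -> Prop) :
  (0 < N)%N ->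
  (forall th, Th th -> in_calR th) ->
  nondegenerate_param Th ->
  complete_H Th /\ sufficient_H Th.
Proof.
move=> _ _ nd; split; [exact: comp_part | exact: suff_part].
Qed.
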